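(* Let $n \geq 2k \geq 4$ and let $\mathcal F, \mathcal G \subset \binom{[n]}{k}$ be non-trivial, cross-intersecting, initial families. For $P \subset [k+1]$ with $2 \leq |P| \leq k$ let $\mathcal F(P) = \{F \setminus P : F \in \mathcal F,\ F \cap [k+1] = P\}$, $\mathcal G(P) = \{G \setminus P : G \in \mathcal G,\ G \cap [k+1] = P\}$, and $$\alpha(P) = \frac{|\mathcal F(P)|}{\binom{n-k-1}{k-|P|}},\qquad \beta(P) = \frac{|\mathcal G(P)|}{\binom{n-k-1}{k-|P|}}.$$ Then for any disjoint $P, Q \subset [k+1]$ with $2 \le |P|,|Q| \le k$, $$\alpha(P) + \beta(Q) \leq 1.$$
   Context: Families are cross-intersecting if every member of one meets every member of the other; a non-empty family is non-trivial if the intersection of all its members is empty. For $k$-sets $A=\{x_1<\dots<x_k\}$, $B=\{y_1<\dots<y_k\}$, $A\prec B$ means $x_i\le y_i$ for all $i$; a family is initial if $A\prec B\in\mathcal F$ implies $A\in\mathcal F$. *)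

(* Defs.v *)
From mathcomp Require Import all_boot all_order all_algebra.
Set Implicit Arguments. Unset Strict Implicit. Unset Printing Implicit Defensive.
Import Order.TTheory GRing.Theory Num.Theory.

(* Ground set [n] = {1,...,n} is modelled by 'I_n, element i <-> i+1
   (order preserving). So [k+1] is {x : 'I_n | x < k+1}. *)

Definition elt (n : nat) (A : {set 'I_n}) (i : nat) : nat :=
  nth 0 (sort leq [seq val x | x in A]) i.

Definition prec (n k : nat) (A B : {set 'I_n}) : Prop :=
  #|A| = k /\ #|B| = k /\ forall i, i < k -> elt A i <= elt B i.

Definition kfamily (n k : nat) (F : {set {set 'I_n}}) : Prop :=
  forall A, A \in F -> #|A| = k.

Definition initial (n k : nat) (F : {set {set 'I_n}}) : Prop :=
  forall A B, prec k A B -> B \in F -> A \in F.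

Definition cross_intersecting (n : nat) (F G : {set {set 'I_n}}) : Prop :=
  forall A B, A \in F -> B \in G -> A :&: B != set0.

Definition nontrivial (n : nat) (F : {set {set 'I_n}}) : Prop :=
  F != set0 /\ \bigcap_(A in F) A = set0.

Definition firstK1 (n k : nat) : {set 'I_n} := [set x : 'I_n | x < k.+1].

Definition restr (n k : nat) (F : {set {set 'I_n}}) (P : {set 'I_n}) : {set {set 'I_n}} :=
  [set A :\: P | A in [set A in F | A :&: firstK1 n k == P]].

Definition density (n k : nat) (F : {set {set 'I_n}}) (P : {set 'I_n}) : rat :=
  (#|restr k F P|%:R / ('C(n - k - 1, k - #|P|))%:R)%R.

(* Main.v *)
Require Import Defs.
From mathcomp Require Import all_boot all_order all_algebra.
From mathcomp Require Import ring zify.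
Set Implicit Arguments. Unset Strict Implicit. Unset Printing Implicit Defensive.
Import Order.TTheory GRing.Theory Num.Theory.

Lemma sorted_nth_le (s : seq nat) i v : sorted leq s -> i < size s ->
  (nth 0 s i <= v) = (i < count (fun x => x <= v) s).
Proof.
elim: s i => [|x s IH] i //= hs hi.
have hs' : sorted leq s by apply: path_sorted hs.
have allx : all (leq x) s by apply: order_path_min hs; exact: leq_trans.
have c0 : v < x -> count (fun y => y <= v) s = 0.
  move=> vx; apply/eqP; rewrite eqn0Ngt -has_count; apply/hasPn => y ys.
  move/allP: allx => /(_ y ys) xy; rewrite -ltnNge; exact: leq_trans vx xy.
case: i hi => [|j] hi /=.
  case xv: (x <= v) => //=.
  by rewrite c0 // ltnNge xv.
rewrite IH //.
case xv: (x <= v) => /=; first by rewrite add1n ltnS.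
rewrite c0 ?ltnNge ?xv //= add0n ltn0.
Qed.

Lemma count_enum_card (T : finType) (A : {set T}) (p : pred T) :
  count p (enum A) = #|[set z in A | p z]|.
Proof.
have := big_const_seq 0 addn (enum A) p 1.
rewrite big_enum_cond /=.
have -> : forall m, iter m (addn 1) 0 = m by elim=> //= m ->.
move<-; rewrite -sum1_card; apply: eq_bigl => z; by rewrite inE.
Qed.

Lemma count_elt n (A : {set 'I_n}) v :
  count (fun x => x <= v) (sort leq [seq val x | x in A]) = #|[set z in A | val z <= v]|.
Proof.
rewrite (permP (permEl (perm_sort leq _))) count_map.
exact: count_enum_card.
Qed.

Lemma size_elt n (A : {set 'I_n}) : size (sort leq [seq val x | x in A]) = #|A|.
Proof. by rewrite size_sort size_map -cardE. Qed.

Lemma prec_of_counts n k (A B : {set 'I_n}) : #|A| = k -> #|B| = k ->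
  (forall v, #|[set z in B | val z <= v]| <= #|[set z in A | val z <= v]|) ->
  prec k A B.
Proof.
move=> hA hB hc; split=> //; split=> // i ik.
rewrite /elt.
have sA := sort_sorted leq_total [seq val x | x in A].
have sB := sort_sorted leq_total [seq val x | x in B].
rewrite sorted_nth_le ?size_elt ?hA // count_elt.
apply: leq_trans (hc _).
rewrite -count_elt -sorted_nth_le ?size_elt ?hB //.
Qed.

Lemma card_firstK1 n k : k < n -> #|firstK1 n k| = k.+1.
Proof.
move=> kn.
have h : k.+1 <= n by [].
have -> : firstK1 n k = [set widen_ord h i | i : 'I_k.+1].
  apply/setP => x; rewrite inE; apply/idP/imsetP => [xk|[i _ ->]] /=.
    by exists (Ordinal xk) => //; apply: val_inj.
  exact: ltn_ord.
rewrite card_imset ?card_ord //.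
by move=> i j /(congr1 val) /= /val_inj.
Qed.

Lemma mem_restr n k (F : {set {set 'I_n}}) P X : X \in restr k F P ->
  exists A, [/\ A \in F, A :&: firstK1 n k = P & X = A :\: P].
Proof.
by case/imsetP => A; rewrite inE => /andP[AF /eqP AK] ->; exists A.
Qed.

Lemma restr_props n k (F : {set {set 'I_n}}) P X : kfamily k F ->
  X \in restr k F P -> X \subset ~: firstK1 n k /\ #|X| = k - #|P|.
Proof.
move=> kF /mem_restr [A [AF AK ->]]; split.
  apply/subsetP => z; rewrite !inE => /andP[zP zA].
  apply/negP => zK; move/negP: zP; apply; rewrite -AK !inE zA.
  exact: zK.
have PA : P \subset A by rewrite -AK subsetIl.
by rewrite cardsD (setIidPr PA) kF.
Qed.

Lemma cnt_split n (S : {set 'I_n}) v :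
  #|[set z in S | val z <= v]| + #|[set z in S | v < val z]| = #|S|.
Proof.
rewrite -(cardsID [set z : 'I_n | val z <= v] S); congr (_ + _); apply: eq_card => z;
  by rewrite !inE // ltnNge andbC.
Qed.

Lemma key n k (F G : {set {set 'I_n}}) (P Q X Y W : {set 'I_n}) : k < n ->
  kfamily k F -> kfamily k G -> cross_intersecting F G -> initial k F ->
  P \subset firstK1 n k -> Q \subset firstK1 n k -> [disjoint P & Q] -> 0 < #|Q| ->
  X \in restr k F P -> W \in restr k G Q -> Y \subset X -> #|Y| = #|Q|.-1 ->
  Y :&: W != set0.
Proof.
move=> kn kF kG cFG iF PK QK dPQ Q0 XF WG YX cY.
have [XU cX] := restr_props kF XF.
have [WU cW] := restr_props kG WG.
case/mem_restr: XF => A [AF AK EX].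
case/mem_restr: WG => B [BG BK EW].
set K := firstK1 n k in PK QK AK BK XU WU.
have cK : #|K| = k.+1 by exact: card_firstK1.
set R := K :\: (P :|: Q).
have PQ0 : P :&: Q = set0 by apply/eqP; rewrite setI_eq0.
have cPQ : #|P :|: Q| = #|P| + #|Q| by rewrite cardsU PQ0 cards0 subn0.
have PQK : P :|: Q \subset K by rewrite subUset PK QK.
have cR : #|R| = k.+1 - (#|P| + #|Q|) by rewrite cardsD (setIidPr PQK) cK cPQ.
have lePQ : #|P| + #|Q| <= k.+1 by rewrite -cPQ -cK subset_leq_card.
have YU : Y \subset ~: K by apply: subset_trans YX XU.
have RK : R \subset K by apply: subsetDl.
set A' := P :|: R :|: Y.
have PR0 : P :&: R = set0.
  apply/setP => z; rewrite !inE; by case: (z \in P); rewrite ?andbF.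
have PRY0 : (P :|: R) :&: Y = set0.
  apply/setP => z; rewrite !inE; case zY: (z \in Y); rewrite ?andbF //.
  have : z \in ~: K by apply: (subsetP YU).
  rewrite inE => /negbTE zK.
  have zP : z \notin P by apply/negP => /(subsetP PK); rewrite zK.
  have zk : (z < k.+1) = false by move: zK; rewrite inE.
  by rewrite (negbTE zP) zk /= andbF.
have cA' : #|A'| = k.
  rewrite /A' cardsU PRY0 cards0 subn0 cardsU PR0 cards0 subn0 cR cY.
  move: lePQ Q0; clear; move: #|P| #|Q| => p q; lia.
have cA : #|A| = k by apply: kF.
have XA : X \subset A by rewrite EX subsetDl.
have pr : prec k A' A.
  apply: prec_of_counts => // v.
  case: (ltnP v k.+1) => vk.
    apply: subset_leq_card; apply/subsetP => z; rewrite !inE => /andP[zA zv].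
    rewrite zv andbT; apply/orP; left; apply/orP; left.
    by rewrite -AK !inE zA /= (leq_ltn_trans zv vk).
  have h1 := cnt_split A v. have h2 := cnt_split A' v.
  suff : #|[set z in A' | v < val z]| <= #|[set z in A | v < val z]|.
    move: h1 h2; rewrite cA cA'; clear.
    move: #|[set z in A' | v < val z]| #|[set z in A | v < val z]| #|[set z in A' | val z <= v]| #|[set z in A | val z <= v]| => a b c d; lia.
  apply: subset_leq_card; apply/subsetP => z; rewrite !inE => /andP[zA' vz].
  rewrite vz andbT.
  have zK : z \notin K by rewrite inE -leqNgt (leq_trans vk (ltnW vz)).
  move: zA' => /orP[/orP[zP|/andP[_ zk]]|zY].
  - by move/negP: zK; case; exact: (subsetP PK).
  - by move: zK; rewrite inE zk.
  - exact: (subsetP XA) (subsetP YX z zY).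
have A'F : A' \in F by apply: iF pr AF.
have := cFG _ _ A'F BG; case/set0Pn => z; rewrite inE => /andP[zA' zB].
have zK : z \notin K.
  apply/negP => zK.
  have zQ : z \in Q by rewrite -BK inE zB.
  move: zA'; rewrite !inE => /orP[/orP[zP|zR]|zY].
  - by move/setP: PQ0 => /(_ z); rewrite !inE zP zQ.
  - by move: zR; rewrite zQ orbT.
  - by move: (subsetP YU z zY); rewrite inE zK.
apply/set0Pn; exists z; rewrite inE; apply/andP; split.
  move: zA'; rewrite !inE => /orP[/orP[zP|/andP[_ zk]]|//].
  - by move/negP: zK; case; exact: (subsetP PK).
  - by move: zK; rewrite inE zk.
rewrite EW inE zB andbT; apply/negP => zQ; move/negP: zK; apply; exact: (subsetP QK).
Qed.
Lemma arith x d h g Ca Cb Cc Cac Cmca Cmcb Cmbc : 0 < Cac -> 0 < Cmbc -> 0 < Cc ->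
  Ca * Cac = Cc * Cmca -> Cc * Cmcb = Cb * Cmbc ->
  x * Cac <= d * Cmca -> d * Cmcb <= h * Cmbc -> g + h <= Cb ->
  x * Cb + g * Ca <= Ca * Cb.
Proof.
move=> p1 p2 p3 e1 e2 i1 i2 i3.
have j1 : x * Cc <= d * Ca.
  rewrite -(leq_pmul2r p1).
  have -> : d * Ca * Cac = (d * Cmca) * Cc by rewrite -mulnA e1; ring.
  have -> : x * Cc * Cac = (x * Cac) * Cc by ring.
  by rewrite leq_mul2r i1 orbT.
have j2 : d * Cb <= h * Cc.
  rewrite -(leq_pmul2r p2).
  have -> : d * Cb * Cmbc = (d * Cmcb) * Cc by rewrite -mulnA -e2; ring.
  have -> : h * Cc * Cmbc = (h * Cmbc) * Cc by ring.
  by rewrite leq_mul2r i2 orbT.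
have j3 : x * Cb <= h * Ca.
  rewrite -(leq_pmul2r p3).
  have -> : x * Cb * Cc = (x * Cc) * Cb by ring.
  apply: (@leq_trans (d * Ca * Cb)); first by rewrite leq_mul2r j1 orbT.
  have -> : d * Ca * Cb = (d * Cb) * Ca by ring.
  have -> : h * Ca * Cc = (h * Cc) * Ca by ring.
  by rewrite leq_mul2r j2 orbT.
apply: leq_trans (leq_add j3 (leqnn _)) _.
by rewrite -mulnDl mulnC leq_mul2l addnC i3 orbT.
Qed.
Lemma binid1 m a c : c <= a -> a <= m ->
  'C(m, a) * 'C(a, c) = 'C(m, c) * 'C(m - c, a - c).
Proof.
move=> ca am.
have X0 : 0 < c`! * (a - c)`! * (m - a)`! by rewrite !muln_gt0 !fact_gt0.
apply/eqP; rewrite -(eqn_pmul2r X0); apply/eqP.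
have h1 := bin_fact am. have h2 := bin_fact ca.
have h3 : c <= m by lia.
have h4 := bin_fact h3.
have h5 : a - c <= m - c by lia.
have h6 := bin_fact h5.
have e : m - c - (a - c) = m - a by lia.
rewrite e in h6.
transitivity ('C(m, a) * (('C(a, c) * (c`! * (a - c)`!)) * (m - a)`!)); first ring.
rewrite h2 h1.
transitivity ('C(m, c) * (c`! * ('C(m - c, a - c) * ((a - c)`! * (m - a)`!)))); last ring.
by rewrite h6.
Qed.

Lemma binid2 m b c : b + c <= m ->
  'C(m, c) * 'C(m - c, b) = 'C(m, b) * 'C(m - b, c).
Proof.
move=> h.
have X0 : 0 < c`! * b`! * (m - b - c)`! by rewrite !muln_gt0 !fact_gt0.
apply/eqP; rewrite -(eqn_pmul2r X0); apply/eqP.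
have h1 : c <= m by lia. have h2 : b <= m - c by lia.
have h3 : b <= m by lia. have h4 : c <= m - b by lia.
have g1 := bin_fact h1. have g2 := bin_fact h2. have g3 := bin_fact h3. have g4 := bin_fact h4.
have e : m - c - b = m - b - c by lia.
rewrite e in g2.
transitivity ('C(m, c) * (c`! * ('C(m - c, b) * (b`! * (m - b - c)`!)))); first ring.
rewrite g2 g1.
transitivity ('C(m, b) * (b`! * ('C(m - b, c) * (c`! * (m - b - c)`!)))); last ring.
by rewrite g4 g3.
Qed.
Lemma dcount (T T' : finType) (L : {set T}) (N : T -> {set T'}) p q :
  (forall x, x \in L -> #|N x| = p) ->
  (forall y, y \in \bigcup_(x in L) N x -> #|[set x in L | y \in N x]| <= q) ->
  #|L| * p <= #|\bigcup_(x in L) N x| * q.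
Proof.
move=> hp hq.
set Un := \bigcup_(x in L) N x.
rewrite -sum_nat_const -[X in _ <= X]sum_nat_const.
have -> : \sum_(x in L) p = \sum_(x in L) \sum_(y in Un) (y \in N x : nat).
  apply: eq_bigr => x xL; rewrite -(hp x xL) -sum1_card.
  rewrite big_mkcond [RHS]big_mkcond /=; apply: eq_bigr => y _.
  case yN: (y \in N x) => //.
  by have -> : y \in Un by apply/bigcupP; exists x.
  by case: (y \in Un).
rewrite exchange_big /=; apply: leq_sum => y yU.
apply: leq_trans (hq y yU).
rewrite -sum1_card big_mkcond /= [X in _ <= X]big_mkcond /=.
apply: leq_sum => x _; rewrite inE.
by case: (x \in L); case: (y \in N x).
Qed.
Theorem claim3p1 (n k : nat) (F G : {set {set 'I_n}}) :
  (4 <= 2 * k)%N -> (2 * k <= n)%N ->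
  kfamily k F -> kfamily k G ->
  nontrivial F -> nontrivial G ->
  cross_intersecting F G ->
  initial k F -> initial k G ->
  forall P Q : {set 'I_n},
    P \subset firstK1 n k -> Q \subset firstK1 n k ->
    [disjoint P & Q] ->
    (2 <= #|P| <= k)%N -> (2 <= #|Q| <= k)%N ->
    (density k F P + density k G Q <= 1)%R.
Proof.
move=> hk hn kF kG _ _ cFG iF iG P Q PK QK dPQ /andP[P2 Pk] /andP[Q2 Qk].
have kn : (k < n)%N by lia.
have cK := card_firstK1 kn.
set U := ~: firstK1 n k.
have cU : #|U| = (n - k - 1)%N.
  have := cardsC (firstK1 n k); rewrite cK card_ord -/U; lia.
have PQ0 : P :&: Q = set0 by apply/eqP; rewrite setI_eq0.
have lePQ : (#|P| + #|Q| <= k.+1)%N.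
  have := cardsU P Q; rewrite PQ0 cards0 subn0 => <-.
  by rewrite -cK subset_leq_card // subUset PK QK.
set m := (n - k - 1)%N.
set a := (k - #|P|)%N. set b := (k - #|Q|)%N. set c := (#|Q|.-1)%N.
have ca : (c <= a)%N by rewrite /c /a; lia.
have am : (a <= m)%N by rewrite /a /m; lia.
have bcm : (b + c <= m)%N by rewrite /b /c /m; lia.
set FA := restr k F P. set GB := restr k G Q.
set D := \bigcup_(X in FA) [set Y : {set 'I_n} | Y \subset X & #|Y| == c].
set H := \bigcup_(Y in D) [set W : {set 'I_n} | W \subset U :\: Y & #|W| == b].
have Dprop : forall Y, Y \in D -> [/\ Y \subset U, #|Y| = c &
    exists2 X, X \in FA & Y \subset X].
  move=> Y /bigcupP [X XF]; rewrite inE => /andP[YX /eqP cY].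
  have [XU _] := restr_props kF XF.
  split=> //; [exact: subset_trans YX XU | by exists X].
have cUD : forall Y : {set 'I_n}, Y \subset U -> #|U :\: Y| = (#|U| - #|Y|)%N.
  by move=> Y YU; rewrite cardsD (setIidPr YU).
have DC1 : (#|FA| * 'C(a, c) <= #|D| * 'C(m - c, a - c))%N.
  apply: dcount => [X XF|Y YD].
    by have [_ cX] := restr_props kF XF; rewrite cards_draws cX.
  have [YU cY _] := Dprop Y YD.
  set S := [set X in FA | Y \in [set Y0 : {set 'I_n} | Y0 \subset X & #|Y0| == c]].
  have inj : {in S &, injective (fun X => X :\: Y)}.
    move=> X1 X2; rewrite !inE => /andP[_ /andP[Y1 _]] /andP[_ /andP[Y2 _]] e.
    by rewrite -(setID X1 Y) -(setID X2 Y) (setIidPr Y1) (setIidPr Y2) e.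
  rewrite -(card_in_imset inj).
  apply: leq_trans (_ : #|[set Z : {set 'I_n} | Z \subset U :\: Y & #|Z| == a - c]| <= _)%N.
    apply: subset_leq_card; apply/subsetP => Z /imsetP [X]; rewrite !inE.
    move=> /andP[XF /andP[YX _]] ->.
    have [XU cX] := restr_props kF XF.
    by rewrite setSD //= cardsD (setIidPr YX) cX cY.
  by rewrite cards_draws cUD // cU cY.
have DC2 : (#|D| * 'C(m - c, b) <= #|H| * 'C(m - b, c))%N.
  apply: dcount => [Y YD|W /bigcupP [Y0 Y0D]].
    have [YU cY _] := Dprop Y YD.
    by rewrite cards_draws cUD // cU cY.
  rewrite inE => /andP[WUY /eqP cW].
  have WU : W \subset U by apply: subset_trans WUY (subsetDl _ _).
  apply: leq_trans (_ : #|[set Y : {set 'I_n} | Y \subset U :\: W & #|Y| == c]| <= _)%N.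
    apply: subset_leq_card; apply/subsetP => Y; rewrite !inE.
    move=> /andP[YD /andP[WY _]].
    have [YU cY _] := Dprop Y YD.
    rewrite cY eqxx andbT; apply/subsetP => z zY; rewrite inE (subsetP YU z zY) andbT.
    apply/negP => zW; have := subsetP WY z zW; by rewrite inE zY.
  by rewrite cards_draws cUD // cU cW.
have GH : (#|GB| + #|H| <= 'C(m, b))%N.
  have e0 : GB :&: H = set0.
    apply/setP => W; rewrite !inE; apply/negP => /andP[WG /bigcupP [Y YD]].
    rewrite inE => /andP[WUY _].
    have [YU cY [X XF YX]] := Dprop Y YD.
    have := key kn kF kG cFG iF PK QK dPQ (ltnW Q2) XF WG YX cY.
    case/set0Pn => z; rewrite inE => /andP[zY zW].
    by have := subsetP WUY z zW; rewrite !inE zY.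
  have := cardsU GB H; rewrite e0 cards0 subn0 => <-.
  rewrite /m -cU -cards_draws.
  apply: subset_leq_card; apply/subsetP => W; rewrite inE => /orP[WG|].
    by have [WU cW] := restr_props kG WG; rewrite inE WU cW eqxx.
  case/bigcupP => Y _; rewrite !inE => /andP[WUY ->]; rewrite andbT.
  exact: subset_trans WUY (subsetDl _ _).
have p1 : (0 < 'C(a, c))%N by rewrite bin_gt0.
have p2 : (0 < 'C(m - b, c))%N by rewrite bin_gt0; lia.
have p3 : (0 < 'C(m, c))%N by rewrite bin_gt0; lia.
have N := arith p1 p2 p3 (binid1 ca am) (binid2 bcm) DC1 DC2 GH.
have Ca0 : (0 < 'C(m, a))%N by rewrite bin_gt0.
have Cb0 : (0 < 'C(m, b))%N by rewrite bin_gt0; lia.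
rewrite /density -/FA -/GB -/m -/a -/b.
have -> : ((#|FA|%:R / 'C(m, a)%:R + #|GB|%:R / 'C(m, b)%:R : rat)
    = ((#|FA| * 'C(m, b) + #|GB| * 'C(m, a))%N)%:R / (('C(m, a) * 'C(m, b))%N)%:R)%R.
  rewrite natrD !natrM; field.
  by rewrite !pnatr_eq0 -!lt0n Ca0 Cb0.
rewrite ler_pdivrMr; last by rewrite ltr0n muln_gt0 Ca0 Cb0.
by rewrite mul1r ler_nat.
Qed.
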